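(* Let $n\ge 3$ and let $A_1\ldots A_n$ be a regular $n$-gon in the coordinate plane. Let $f(x)$ be a real polynomial of degree $n$ whose roots, counted with multiplicity, are the abscissas of $A_1,\ldots,A_n$ (i.e. $f(x)=c\prod_{j=1}^n (x-x(A_j))$, $c\neq 0$). Then every root of $f$ has multiplicity at most $2$, $f'$ has $n-1$ distinct real roots, and if $l_1,\ldots,l_{n-1}$ are the vertical lines through these roots, then the leftmost and the rightmost of these lines are tangent to the circle inscribed in $A_1\ldots A_n$. Equivalently, if $O=(o,\cdot)$ is the center and $r$ the inradius of the polygon, then the smallest root of $f'$ is $o-r$ and the largest is $o+r$.
   Context: ''Vertical'' means parallel to the ordinate axis; $x(P)$ denotes the abscissa of a point $P$. *)

(* Defs.v *)
From HB Require Import structures.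
From mathcomp Require Import all_boot all_order all_algebra.
From mathcomp Require Import all_classical all_reals all_analysis.
Set Implicit Arguments. Unset Strict Implicit. Unset Printing Implicit Defensive.
Import Order.TTheory GRing.Theory Num.Theory.
Local Open Scope ring_scope.

(* A regular n-gon A_0 ... A_{n-1} (vertices listed in cyclic order, either
   orientation) with center O, circumradius rho > 0 and initial angle theta:
   A_j = O + rho (cos (theta + eps 2 pi j / n), sin (theta + eps 2 pi j / n)),
   eps = +1 or -1. *)
Definition regular_ngon_with (R : realType) (n : nat) (A : 'I_n -> R * R)
    (O : R * R) (rho theta : R) : Prop :=
  0 < rho /\
  exists eps : R, (eps = 1 \/ eps = -1) /\
  forall j : 'I_n,
    A j = (O.1 + rho * cos (theta + eps * (2 * pi * (j%:R) / n%:R)),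
           O.2 + rho * sin (theta + eps * (2 * pi * (j%:R) / n%:R))).

Definition regular_ngon (R : realType) (n : nat) (A : 'I_n -> R * R) : Prop :=
  exists (O : R * R) (rho theta : R), regular_ngon_with A O rho theta.

(* Main.v *)
Require Import Defs.
From HB Require Import structures.
From mathcomp Require Import all_boot all_order all_algebra.
From mathcomp Require Import all_classical all_reals all_analysis.
From mathcomp Require Import complex.
From mathcomp Require polyorder.
From mathcomp Require Import ring lra.
Import Order.TTheory GRing.Theory Num.Theory.
Local Open Scope ring_scope.
Section S.
Variable R : realType.
Definition E (t : R) : R[i] := (cos t +i* sin t)%C.
Lemma ED a b : E (a + b) = E a * E b.
Proof. rewrite /E. simpc. rewrite cosD sinD. congr (_ +i* _)%C. by rewrite addrC. Qed.
Lemma E0 : E 0 = 1.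
Proof. by rewrite /E cos0 sin0. Qed.
Lemma EX a k : E a ^+ k = E (k%:R * a).
Proof.
elim: k => [|k IH]; first by rewrite expr0 mul0r E0.
by rewrite exprS IH -ED mulrS mulrDl mul1r.
Qed.
Lemma EV a : (E a)^-1 = E (- a).
Proof. by apply: mulr1_eq; rewrite -ED subrr E0. Qed.
Lemma EDV a : E a + (E a)^-1 = (2 * cos a)%:C%C.
Proof. rewrite EV /E cosN sinN; simpc. by rewrite mulr_natl mulr2n. Qed.
Lemma E_neq0 a : E a != 0.
Proof. apply/eqP => h; have := ED a (-a); rewrite subrr E0 h mul0r.
by move/eqP; rewrite oner_eq0. Qed.
End S.
Lemma prod_sub (F : fieldType) n (w v z : F) : n.-primitive_root w ->
  \prod_(i < n) (z - v * w ^+ i) = z ^+ n - v ^+ n.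
Proof.
move=> pw; have n0 := prim_order_gt0 pw.
have [->|v0] := eqVneq v 0.
  rewrite (eq_bigr (fun=> z)) => [|i _]; last by rewrite mul0r subr0.
  by rewrite prodr_const card_ord expr0n gtn_eqF // subr0.
have h := congr1 (horner ^~ (z / v)) (factor_Xn_sub_1 pw).
move: h; rewrite horner_prod big_mkord hornerD hornerN hornerXn hornerC => h.
have e : forall i : 'I_n, z - v * w ^+ i = v * (horner ('X - (w ^+ i)%:P) (z / v)).
  by move=> i; rewrite hornerXsubC mulrBr mulrCA divff // mulr1.
rewrite (eq_bigr _ (fun i _ => e i)) big_split /= prodr_const card_ord h.
by rewrite mulrBr mulr1 exprMn exprVn mulrCA divff ?mulr1 // expf_neq0.
Qed.
Lemma prod_key (F : fieldType) n (w w' u z : F) : n.-primitive_root w ->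
  n.-primitive_root w' -> w * w' = 1 -> z != 0 -> u != 0 ->
  \prod_(i < n) ((z + z^-1) - (u * w ^+ i + (u * w ^+ i)^-1)) =
  (z ^+ n + (z ^+ n)^-1) - (u ^+ n + (u ^+ n)^-1).
Proof.
move=> pw pw' ww' z0 u0.
have w0 : w != 0 by apply/eqP => h; move: ww'; rewrite h mul0r => /eqP; rewrite eq_sym oner_eq0.
have e : forall i : 'I_n, (z + z^-1) - (u * w ^+ i + (u * w ^+ i)^-1) =
   z^-1 * ((z - u * w ^+ i) * (z - u^-1 * w' ^+ i)).
  move=> i; have xi : u * w ^+ i != 0 by rewrite mulf_neq0 // expf_neq0.
  have -> : u^-1 * w' ^+ i = (u * w ^+ i)^-1.
    by rewrite invfM -exprVn (mulr1_eq ww').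
  by move: (u * w ^+ i) xi => x xi; field; rewrite xi z0.
rewrite (eq_bigr _ (fun i _ => e i)) big_split /= prodr_const card_ord.
rewrite big_split /= !prod_sub // exprVn.
have zn : z ^+ n != 0 by rewrite expf_neq0.
have un : u ^+ n != 0 by rewrite expf_neq0.
rewrite exprVn.
by move: (z ^+ n) (u ^+ n) zn un => Z U Z0 U0; field; rewrite Z0 U0.
Qed.
Arguments E {R}.
Section S2.
Variable R : realType.
Lemma cos_lt1 (y : R) : 0 < y < pi *+ 2 -> cos y < 1.
Proof.
move=> /andP[y0 y2].
have -> : y = (y / 2) *+ 2 by rewrite mulr2n; field.
rewrite cos_mulr2n cos2sin2.
have : 0 < sin (y / 2).
  apply: sin_gt0_pi; apply/andP; split; first by rewrite divr_gt0.
  by rewrite ltr_pdivrMr // mulr_natr.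
move=> s0; have : 0 < sin (y/2) ^+ 2 by rewrite exprn_gt0.
lra.
Qed.

Lemma Eeq1 (x : R) : E x = 1 -> cos x = 1.
Proof. by move=> /(congr1 (@complex.Re R)). Qed.

Lemma primE n (eps : R) : (0 < n)%N -> eps = 1 \/ eps = -1 ->
  n.-primitive_root (E (eps * (2 * pi / n%:R))).
Proof.
move=> n0 he; have nR : n%:R != 0 :> R by rewrite pnatr_eq0 -lt0n.
apply/andP; split=> //; apply/forallP => i; apply/eqP.
rewrite unity_rootE EX.
have [hi|hi] := eqVneq i.+1 n.
  rewrite hi; apply/eqP.
  have -> : n%:R * (eps * (2 * pi / n%:R)) = eps * (pi *+ 2) by rewrite mulr2n; field.
  case: he => ->; rewrite ?mul1r ?mulN1r /E ?mulrNn ?cosN ?sinN cos2pi sin2pi ?oppr0 //.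
apply/negbTE/negP => /eqP /Eeq1.
have -> : i.+1%:R * (eps * (2 * pi / n%:R)) = eps * (pi *+ 2 * (i.+1%:R / n%:R)).
  by rewrite mulr2n; field.
have p2 : 0 < (pi : R) *+ 2 by rewrite mulr2n; apply: addr_gt0; exact: pi_gt0.
have hlt : cos (eps * (pi *+ 2 * (i.+1%:R / n%:R))) < 1.
  have -> : cos (eps * (pi *+ 2 * (i.+1%:R / n%:R))) = cos (pi *+ 2 * (i.+1%:R / n%:R)).
    by case: he => ->; rewrite ?mul1r ?mulN1r ?cosN.
  apply: cos_lt1; apply/andP; split.
    by rewrite mulr_gt0 ?divr_gt0 ?ltr0n.
  rewrite gtr_pMr // ltr_pdivrMr ?ltr0n // mul1r ltr_nat.
  by rewrite ltn_neqAle hi ltn_ord.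
by move=> h; move: hlt; rewrite h ltxx.
Qed.
End S2.
Arguments E_neq0 {R}.
Arguments EX {R}.
Arguments ED {R}.
Arguments EDV {R}.
Arguments E0 {R}.
Section S3.
Variable R : realType.
Lemma prod_cos n (th eps t : R) : (0 < n)%N -> eps = 1 \/ eps = -1 ->
  \prod_(j < n) (2 * cos t - 2 * cos (th + eps * (2 * pi * j%:R / n%:R))) =
  2 * cos (n%:R * t) - 2 * cos (n%:R * th).
Proof.
move=> n0 he; have nR : n%:R != 0 :> R by rewrite pnatr_eq0 -lt0n.
apply: (@complexI R); rewrite rmorph_prod rmorphB /=.
set w := E (eps * (2 * pi / n%:R)); set w' := E ((- eps) * (2 * pi / n%:R)).
have pw : n.-primitive_root w := @primE R n eps n0 he.
have pw' : n.-primitive_root w'.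
  by apply: (@primE R n (- eps)) => //; case: he => ->; [right|left]; rewrite ?opprK.
have ww' : w * w' = 1 by rewrite -ED mulNr subrr E0.
have := @prod_key _ n w w' (E th) (E t) pw pw' ww' (E_neq0 t) (E_neq0 th).
rewrite !EX !EDV => <-.
apply: eq_bigr => i _.
rewrite rmorphB /= EX -ED EDV.
have -> : eps * (2 * pi * i%:R / n%:R) = i%:R * (eps * (2 * pi / n%:R)) by ring.
by [].
Qed.
End S3.
Section S4.
Variable R : realType.
Lemma sin_natpi k : sin (k%:R * pi) = 0 :> R.
Proof.
elim: k => [|k IH]; first by rewrite mul0r sin0.
by rewrite -addn1 natrD mulrDl mul1r sinDpi IH oppr0.
Qed.

Lemma derivable_comp1 (f g : R -> R) x : derivable f x 1 -> derivable g (f x) 1 ->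
  derivable (g \o f) x 1.
Proof.
move=> /derivable1_diffP df /derivable1_diffP dg; apply/derivable1_diffP.
exact: differentiable_comp.
Qed.

Lemma dcos (t : R) : (cos^`())%classic t = - sin t.
Proof. by rewrite derive1E derive_val. Qed.

Lemma deriv_trig (F : {poly R}) (K C : R) n :
  (forall t, F.[cos t] = K * (2 * cos (n%:R * t) - C)) ->
  forall t, F^`().[cos t] * sin t = K * 2 * n%:R * sin (n%:R * t).
Proof.
move=> hF t.
pose P : {poly R} := (K * 2) *: 'X - (K * C)%:P.
pose M : {poly R} := n%:R *: 'X.
have e : horner F \o cos = (horner P \o cos) \o horner M.
  apply/funext => y /=; rewrite hF /P /M !hornerE.
  by rewrite mulrBr mulrA.
have := congr1 (fun g => (g^`())%classic t) e => /=.
rewrite derive1_comp; [|exact: derivable_cos|exact: derivable_horner].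
rewrite (@derive1_comp _ (horner M) (horner P \o cos)).
2: exact: derivable_horner.
2: apply: (@derivable_comp1 cos (horner P)).
2: exact: derivable_cos.
2: exact: derivable_horner.
rewrite (@derive1_comp _ cos (horner P) M.[t]).
2: exact: derivable_cos.
2: exact: (@derivable_horner _ P).
rewrite -(@derivE _ F) -(@derivE _ P) -(@derivE _ M) !dcos /P /M.
rewrite derivB derivC derivZ derivX subr0 derivZ derivX !hornerE.
move=> h; apply: oppr_inj; by rewrite -mulrN h /= mulr1 !mulrN !mulNr mulrAC.
Qed.
End S4.
Theorem theorem1 (R : realType) (n : nat) (hn : (3 <= n)%N)
    (A : 'I_n -> R * R) (O : R * R) (rho theta : R)
    (hA : regular_ngon_with A O rho theta)
    (f : {poly R}) (c : R) (hc : c != 0)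
    (hf : f = c *: \prod_(j < n) ('X - ((A j).1)%:P)) :
  let r := rho * cos (pi / n%:R) in
  (forall x : R, (mup x f <= 2)%N) /\
  exists s : seq R,
    [/\ uniq s, size s = n.-1,
        (forall x : R, root f^`() x <-> x \in s),
        O.1 - r \in s /\ O.1 + r \in s &
        (forall x, x \in s -> O.1 - r <= x <= O.1 + r)].
Proof.
move=> r; case: hA => rho0 [eps [he hAj]].
set o := O.1.
have n0 : (0 < n)%N by apply: leq_trans hn.
have nR : n%:R != 0 :> R by rewrite pnatr_eq0 -lt0n.
have nRp : 0 < n%:R :> R by rewrite ltr0n.
pose phi (j : 'I_n) := theta + eps * (2 * pi * j%:R / n%:R).
have fE : f = c *: \prod_(j < n) ('X - (o + rho * cos (phi j))%:P).
  by rewrite hf; congr (_ *: _); apply: eq_bigr => j _; rewrite hAj.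
have sf : size f = n.+1.
  by rewrite fE size_scale // size_prod_XsubC -[X in size X]filter_predT deprecated_filter_index_enum size_enum_ord.
have f0 : f != 0 by rewrite -size_poly_eq0 sf.
have sf' : size f^`() = n by rewrite polyorder.size_deriv sf.
have f'0 : f^`() != 0 by rewrite -size_poly_eq0 sf' -lt0n.
pose q : {poly R} := o%:P + rho *: 'X.
pose F := f \Po q.
have hF : forall t, F.[cos t] = (c * (rho / 2) ^+ n) * (2 * cos (n%:R * t) - 2 * cos (n%:R * theta)).
  move=> t; rewrite horner_comp fE hornerZ horner_prod /q !hornerE.
  rewrite -(@prod_cos R n theta eps t n0 he) -mulrA; congr (_ * _).
  have -> : (rho / 2) ^+ n = \prod_(j < n) (rho / 2) by rewrite prodr_const card_ord.
  rewrite -big_split /=; apply: eq_bigr => j _.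
  by rewrite hornerXsubC /phi; field.
have hd := @deriv_trig R F _ _ n hF.
have hF' : forall t, f^`().[o + rho * cos t] * rho * sin t =
    (c * (rho / 2) ^+ n) * 2 * n%:R * sin (n%:R * t).
  move=> t; rewrite -hd /F deriv_comp /q derivD derivC derivZ derivX add0r.
  by rewrite hornerM horner_comp !hornerE /= mulr1.
pose y (k : nat) := o + rho * cos (k%:R * pi / n%:R).
have angI : forall k : nat, (k <= n)%N -> (k%:R * pi / n%:R : R) \in `[0, pi].
  move=> k kn; rewrite in_itv /=; apply/andP; split.
    by rewrite mulr_ge0 ?invr_ge0 ?ler0n // mulr_ge0 ?ler0n // pi_ge0.
  by rewrite ler_pdivrMr // [pi * _]mulrC ler_pM2r ?pi_gt0 // ler_nat.
have hroot : forall k : nat, (0 < k < n)%N -> root f^`() (y k).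
  move=> k /andP[k0 kn]; have := hF' (k%:R * pi / n%:R).
  have -> : n%:R * (k%:R * pi / n%:R) = k%:R * (pi : R) by field.
  rewrite sin_natpi mulr0 => /eqP; rewrite !mulf_eq0 (gt_eqF rho0) orbF.
  have -> : (sin (k%:R * (pi : R) / n%:R) == 0) = false.
    apply: gt_eqF; apply: sin_gt0_pi; apply/andP; split.
      by rewrite divr_gt0 // mulr_gt0 ?ltr0n // pi_gt0.
    by rewrite ltr_pdivrMr // [pi * _]mulrC ltr_pM2r ?pi_gt0 // ltr_nat.
  by rewrite orbF => /eqP h; rewrite /root /y h.
have n1 : n.-1.+1 = n := prednK n0.
pose s := [seq y k | k <- iota 1 n.-1].
have ys : forall x, x \in s -> exists k : nat, (0 < k < n)%N /\ x = y k.
  move=> x /mapP[k]; rewrite mem_iota add1n n1 => kn ->.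
  by exists k.
have ymem : forall k : nat, (0 < k < n)%N -> y k \in s.
  by move=> k kn; apply: map_f; rewrite mem_iota add1n n1.
have us : uniq s.
  rewrite map_inj_in_uniq ?iota_uniq // => k l; rewrite !mem_iota !add1n n1.
  move=> /andP[_ /ltnW kn] /andP[_ /ltnW ln]; rewrite /y => /addrI /(mulfI (lt0r_neq0 rho0)).
  move=> /cos_inj => /(_ (angI k kn) (angI l ln)) h.
  have : (k%:R : R) = l%:R.
    have pi0 : (pi : R) != 0 by rewrite gt_eqF // pi_gt0.
    by apply: (mulIf pi0); apply: (mulIf (invr_neq0 nR)).
  by move/eqP; rewrite eqr_nat => /eqP.
have ss : size s = n.-1 by rewrite size_map size_iota.
have sroot : forall x, root f^`() x <-> x \in s.
  move=> x; split; last by move=> /ys[k [kn ->]]; exact: hroot.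
  move=> rx; apply/negPn/negP => xs.
  have := max_poly_roots f'0 (rs := x :: s).
  rewrite /= xs us sf' ss n1 ltnn rx /=.
  have -> : all (root f^`()) s by apply/allP => z /ys[k [kn ->]]; exact: hroot.
  by move=> /(_ isT isT).
have ep : o + r = y 1%N by rewrite /y /r mul1r.
have hn1 : (n.-1)%:R = n%:R - 1 :> R by rewrite -{2}n1 mulrSr addrK.
have em : o - r = y n.-1.
  rewrite /y /r hn1 (_ : (n%:R - 1) * pi / n%:R = pi - pi / n%:R); last by field.
  by rewrite cosB cospi sinpi mul0r addr0 mulN1r mulrN.
have n2 : (1 < n)%N by apply: leq_trans hn.
split; last first.
  exists s; split => //.
    rewrite em ep; split; apply: ymem; apply/andP; split => //.
    - by rewrite -ltnS n1.
    - by rewrite ltn_predL.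
  move=> x /ys[k [/andP[k0 kn] ->]]; rewrite em ep /y !lerD2l !ler_pM2l //.
  have kn' : (k <= n)%N by apply: ltnW.
  have n1n : (n.-1 <= n)%N by apply: leq_pred.
  rewrite leNgt ltr_cos ?angI // -leNgt.
  rewrite [X in _ && X]leNgt ltr_cos ?angI // -leNgt.
  rewrite !ler_pM2r ?invr_gt0 ?pi_gt0 // !ler_nat k0 /=.
  by rewrite andbT -ltnS n1.
move=> x; rewrite leqNgt; apply/negP => h3.
move: (h3); rewrite (mup_geq x 3 f0) => /dvdpP[g hg].
pose h := g^`() * ('X - x%:P) + g *+ 3.
have hd' : f^`() = ('X - x%:P) ^+ 2 * h.
  rewrite hg derivM deriv_exp derivXsubC mul1r /h /=; ring.
have h0 : h != 0 by apply: contra_neq f'0 => h0; rewrite hd' h0 mulr0.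
have X0 : ('X - x%:P) ^+ 2 != 0 by rewrite expf_neq0 // polyXsubC_eq0.
have sh : n = (size h).+2.
  by rewrite -sf' hd' size_mul // size_exp_XsubC.
have xs : x \in s.
  by apply/sroot; rewrite hd' rootM root_exp_XsubC eqxx.
have := max_poly_roots h0 (rs := rem x s).
rewrite rem_uniq // size_rem // ss sh /= ltnn.
suff -> : all (root h) (rem x s) by move=> /(_ isT isT).
apply/allP => z; rewrite mem_rem_uniq // => /andP[zx zs].
have := (sroot z).2 zs; rewrite hd' rootM root_exp_XsubC /=.
by rewrite (negbTE zx).
Qed.
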